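(* Let $w,c\ge 0$ and let $(W_1,\ldots,W_n)$ be a $w$-colourable grading of a graph $G$ with $\chi(G)>w+2c$. Then there exist subsets $X,Y$ of $V(G)$ such that: $G[X]$ and $G[Y]$ are both connected; every vertex in $Y$ is earlier than every vertex in $X$; some vertex in $X$ has a neighbour in $Y$; and $\chi(X)>c$ and $\chi(Y)>c$.
   Context: Graphs are finite and simple. For $X\subseteq V(G)$, $G[X]$ is the induced subgraph and $\chi(X)$ means $\chi(G[X])$. A grading of $G$ is a sequence $(W_1,\ldots,W_n)$ of pairwise disjoint subsets of $V(G)$ with union $V(G)$; it is $w$-colourable if $\chi(G[W_i])\le w$ for $1\le i\le n$. A vertex $u$ is earlier than a vertex $v$ (with respect to the grading) if $u\in W_i$ and $v\in W_j$ with $i<j$. *)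

(* Defs.v *)
From mathcomp Require Import all_boot.
Set Implicit Arguments. Unset Strict Implicit. Unset Printing Implicit Defensive.

Definition simple_graph (T : finType) (e : rel T) : Prop :=
  symmetric e /\ irreflexive e.

Definition colourable (T : finType) (e : rel T) (X : {set T}) (k : nat) : bool :=
  [exists f : {ffun T -> 'I_k},
     [forall x in X, forall y in X, e x y ==> (f x != f y)]].

Lemma chi_ex (T : finType) (e : rel T) (X : {set T}) :
  exists k, colourable e X k || (k == #|T|.+1).
Proof. by exists #|T|.+1; rewrite eqxx orbT. Qed.

(* chromatic number chi(G[X]) = least k such that G[X] is k-colourable
   (for irreflexive e this is attained at some k <= #|T|, so the disjunct
   k = #|T|.+1 never matters). *)
Definition chi (T : finType) (e : rel T) (X : {set T}) : nat :=
  ex_minn (chi_ex e X).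

Definition induced_connected (T : finType) (e : rel T) (X : {set T}) : Prop :=
  X != set0 /\
  forall x y, x \in X -> y \in X ->
    connect [rel u v | (u \in X) && (v \in X) && e u v] x y.

Definition grading (T : finType) (n : nat) (W : 'I_n -> {set T}) : Prop :=
  (forall i j, i != j -> [disjoint W i & W j]) /\
  \bigcup_(i < n) W i = [set: T].

Definition w_colourable_grading (T : finType) (e : rel T) (n : nat)
  (W : 'I_n -> {set T}) (w : nat) : Prop :=
  grading W /\ forall i, chi e (W i) <= w.

Definition earlier (T : finType) (n : nat) (W : 'I_n -> {set T}) (u v : T) : Prop :=
  exists i j : 'I_n, [/\ u \in W i, v \in W j & (i < j)%N].

(* Main.v *)
Require Import Defs.
From mathcomp Require Import all_boot.
From mathcomp Require Import zify.
Set Implicit Arguments. Unset Strict Implicit. Unset Printing Implicit Defensive.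

Definition rS (T : finType) (e : rel T) (S : {set T}) : rel T :=
  [rel u v | (u \in S) && (v \in S) && e u v].
Definition gcomp (T : finType) (e : rel T) (S : {set T}) v : {set T} :=
  [set u in S | connect (rS e S) v u].
Definition connb (T : finType) (e : rel T) (X : {set T}) : bool :=
  (X != set0) && [forall x in X, forall y in X, connect (rS e X) x y].

Lemma connbP (T : finType) (e : rel T) (X : {set T}) : connb e X -> induced_connected e X.
Proof.
move=> /andP [ne /forallP H]; split => // x y xX yX.
by move: (H x); rewrite xX /= => /forallP /(_ y); rewrite yX.
Qed.

Lemma connect_exit (T : finType) (r : rel T) (Z : {set T}) x y :
  connect r x y -> x \in Z -> y \notin Z ->
  exists u u', [/\ u \in Z, u' \notin Z & r u u'].
Proof.
move=> /connectP [p]; elim: p x => [|z p IH] x /=.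
  by move=> _ -> xZ; rewrite xZ.
move=> /andP [rxz pz] ey xZ yZ.
case zZ: (z \in Z); first exact: IH zZ yZ.
by exists x, z; rewrite zZ.
Qed.

Lemma rS_sym (T : finType) (e : rel T) (S : {set T}) : symmetric e -> connect_sym (rS e S).
Proof.
move=> hs; apply: sym_connect_sym => a b; rewrite /rS /=.
by rewrite hs; case: (a \in S); case: (b \in S).
Qed.

Lemma comp_lift (T : finType) (e : rel T) (S : {set T}) v x y :
  x \in gcomp e S v -> connect (rS e S) x y -> connect (rS e (gcomp e S v)) x y.
Proof.
move=> xC /connectP [p]; elim: p x xC => [|z p IH] x xC /=.
  by move=> _ ->; exact: connect0.
move=> /andP [rxz pz] ey.
have zC : z \in gcomp e S v.
  move: (rxz) => /= /andP [/andP [xS zS] _].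
  rewrite inE zS /=; move: xC; rewrite inE => /andP [_ cvx].
  exact: connect_trans cvx (connect1 rxz).
apply: connect_trans (IH z zC pz ey); apply: connect1 => /=.
by rewrite /rS /= xC zC; move: rxz => /= /andP [_ ->].
Qed.

Lemma comp_id (T : finType) (e : rel T) (S : {set T}) v : v \in S -> v \in gcomp e S v.
Proof. by move=> vS; rewrite inE vS connect0. Qed.

Lemma comp_sub (T : finType) (e : rel T) (S : {set T}) v : gcomp e S v \subset S.
Proof. by apply/subsetP => u; rewrite inE => /andP []. Qed.

Lemma comp_conn (T : finType) (e : rel T) (S : {set T}) v :
  symmetric e -> v \in S -> connb e (gcomp e S v).
Proof.
move=> hs vS; apply/andP; split; first by apply/set0Pn; exists v; exact: comp_id.
apply/forallP => x; apply/implyP => xC; apply/forallP => y; apply/implyP => yC.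
apply: comp_lift => //.
move: xC yC; rewrite !inE => /andP [_ cx] /andP [_ cy].
by apply: connect_trans cy; rewrite rS_sym.
Qed.

Lemma comp_same (T : finType) (e : rel T) (S : {set T}) v x :
  symmetric e -> x \in gcomp e S v -> gcomp e S x = gcomp e S v.
Proof.
move=> hs; rewrite inE => /andP [xS cvx]; apply/setP => u; rewrite !inE.
case: (u \in S) => //=; apply/idP/idP => h.
  exact: connect_trans cvx h.
by apply: connect_trans h; rewrite rS_sym.
Qed.

Lemma comp_adj (T : finType) (e : rel T) (S : {set T}) x y :
  symmetric e -> x \in S -> y \in S -> e x y -> gcomp e S y = gcomp e S x.
Proof.
move=> hs xS yS exy; apply: comp_same => //.
by rewrite inE yS /=; apply: connect1; rewrite /rS /= xS yS.
Qed.

Lemma colI (T : finType) (e : rel T) (X : {set T}) k (f : {ffun T -> 'I_k}) :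
  (forall x y, x \in X -> y \in X -> e x y -> f x != f y) -> colourable e X k.
Proof.
move=> H; apply/existsP; exists f; apply/forallP => x; apply/implyP => xX.
apply/forallP => y; apply/implyP => yX; apply/implyP; exact: H.
Qed.

Lemma colE (T : finType) (e : rel T) (X : {set T}) k : colourable e X k ->
  exists f : {ffun T -> 'I_k}, forall x y, x \in X -> y \in X -> e x y -> f x != f y.
Proof.
move=> /existsP [f /forallP H]; exists f => x y xX yX exy.
by move: (H x); rewrite xX /= => /forallP /(_ y); rewrite yX exy.
Qed.

Lemma col_sub (T : finType) (e : rel T) (X Y : {set T}) k :
  colourable e X k -> Y \subset X -> colourable e Y k.
Proof.
move=> /colE [f Hf] /subsetP s; apply: (@colI _ _ _ _ f) => x y xY yY.
exact: Hf (s _ xY) (s _ yY).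
Qed.

Lemma col_mono (T : finType) (e : rel T) (X : {set T}) k k' :
  colourable e X k -> k <= k' -> colourable e X k'.
Proof.
move=> /colE [f Hf] le; apply: (@colI _ _ _ _ [ffun x => widen_ord le (f x)]).
move=> x y xX yX exy; rewrite !ffunE.
apply: contra (Hf x y xX yX exy) => /eqP h; apply/eqP; apply: val_inj.
exact: (congr1 val h).
Qed.

Lemma col_union (T : finType) (e : rel T) (A B : {set T}) a b :
  colourable e A a -> colourable e B b -> colourable e (A :|: B) (a + b).
Proof.
move=> /colE [fa Ha] /colE [fb Hb].
apply: (@colI _ _ _ _ [ffun v => if v \in A then lshift b (fa v) else rshift a (fb v)]).
move=> x y; rewrite !inE !ffunE => xAB yAB exy.
case xA: (x \in A); case yA: (y \in A).
- apply: contra (Ha x y xA yA exy) => /eqP h; apply/eqP; apply: val_inj.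
  exact: (congr1 val h).
- apply/eqP => /(congr1 val) /=; have := ltn_ord (fa x); lia.
- apply/eqP => /(congr1 val) /=; have := ltn_ord (fa y); lia.
- move: xAB yAB; rewrite xA yA /= => xB yB.
  apply: contra (Hb x y xB yB exy) => /eqP h; apply/eqP; apply: val_inj.
  move: (congr1 val h) => /=; lia.
Qed.

Lemma col_comps (T : finType) (e : rel T) (S : {set T}) m :
  symmetric e -> S != set0 -> (forall v, v \in S -> colourable e (gcomp e S v) m) ->
  colourable e S m.
Proof.
move=> hs /set0Pn [v0 v0S] H.
have [g0 _] := colE (H v0 v0S).
pose P v (g : {ffun T -> 'I_m}) :=
  [forall x in gcomp e S v, forall y in gcomp e S v, e x y ==> (g x != g y)].
pose g v := odflt g0 [pick g | P v g].
have gP : forall v, v \in S -> forall x y, x \in gcomp e S v -> y \in gcomp e S v ->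
    e x y -> g v x != g v y.
  move=> v vS x y xC yC exy; rewrite /g; case: pickP => [h /= Ph|no].
    by move: Ph => /forallP /(_ x); rewrite xC /= => /forallP /(_ y); rewrite yC exy.
  by move: (H v vS) => /existsP [h Ph]; move: (no h); rewrite /P Ph.
apply: (@colI _ _ _ _ [ffun v => g v v]) => x y xS yS exy; rewrite !ffunE.
have Eg : g y = g x by rewrite /g /P (comp_adj hs xS yS exy).
have yC : y \in gcomp e S x by rewrite -(comp_adj hs xS yS exy) comp_id.
have := gP x xS x y (comp_id _ xS) yC exy.
by rewrite -Eg.
Qed.
From Stdlib Require Import Classical.

Lemma chi_le (T : finType) (e : rel T) (S : {set T}) k :
  colourable e S k -> chi e S <= k.
Proof. by move=> h; rewrite /chi; case: ex_minnP => m _; apply; rewrite h. Qed.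

Lemma col_all (T : finType) (e : rel T) (S : {set T}) :
  irreflexive e -> colourable e S #|T|.
Proof.
move=> hirr; apply: (@colI _ _ _ _ [ffun x => enum_rank x]) => x y _ _ exy.
rewrite !ffunE (inj_eq enum_rank_inj); apply/eqP => xy; subst y.
by rewrite hirr in exy.
Qed.

Lemma chi_col (T : finType) (e : rel T) (S : {set T}) :
  irreflexive e -> colourable e S (chi e S).
Proof.
move=> hirr; rewrite /chi; case: ex_minnP => m /orP [//|/eqP ->] /(_ #|T|).
by rewrite col_all // => /(_ isT); rewrite ltnn.
Qed.

Theorem mainTheorem2 (T : finType) (e : rel T) (w c n : nat)
  (W : 'I_n -> {set T}) :
  simple_graph e ->
  w_colourable_grading e W w ->
  w + 2 * c < chi e [set: T] ->
  exists X Y : {set T},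
    [/\ induced_connected e X /\ induced_connected e Y,
        (forall y x, y \in Y -> x \in X -> earlier W y x),
        (exists x y, [/\ x \in X, y \in Y & e x y]),
        c < chi e X & c < chi e Y].
Proof.
move=> [hs hirr] [[hdisj hcov] hW] hchi.
apply: NNPP => H.
have idx : forall v, exists i, v \in W i.
  move=> v; have : v \in \bigcup_(i < n) W i by rewrite hcov inE.
  by move=> /bigcupP [i _ vi]; exists i.
have uniq : forall v i j, v \in W i -> v \in W j -> i = j.
  move=> v i j vi vj; apply/eqP; apply: contraT => ij.
  have := hdisj i j ij; rewrite -setI_eq0 => /eqP h0.
  have : v \in W i :&: W j by rewrite inE vi vj.
  by rewrite h0 inE.
pose Pre (j : nat) := [set u | [exists i : 'I_n, (u \in W i) && (i < j)]].
pose big (X : {set T}) := c < chi e X.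
have Hno : forall X Y, connb e X -> connb e Y -> big X -> big Y ->
    (forall y x, y \in Y -> x \in X -> earlier W y x) ->
    forall x y, x \in X -> y \in Y -> e x y -> False.
  move=> X Y cX cY bX bY ear x y xX yY exy; apply: H; exists X, Y; split => //.
    by split; exact: connbP.
  by exists x, y.
pose U := [set v | [exists i : 'I_n, (v \in W i) && [exists Y : {set T},
    [&& Y \subset Pre i, connb e Y, big Y & [exists y in Y, e v y]]]]].
have smallU : forall v, v \in U -> colourable e (gcomp e U v) c.
  move=> v vU; set X := gcomp e U v.
  case bX: (big X); last first.
    by apply: (col_mono (chi_col _ hirr)); rewrite leqNgt; exact: negbT bX.
  exfalso.
  have exP : exists k, [exists x in X, exists i : 'I_n, (x \in W i) && (i == k :> nat)].
    have [i vi] := idx v; exists (nat_of_ord i); apply/existsP; exists v.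
    rewrite comp_id //=; apply/existsP; exists i; by rewrite vi eqxx.
  case: (ex_minnP exP) => k /existsP [x /andP [xX /existsP [i /andP [xi /eqP ik]]]] kmin.
  have : x \in U by apply: (subsetP (comp_sub _ _ _)) xX.
  rewrite inE => /existsP [i' /andP [xi' /existsP [Y /and4P [YP cY bY /existsP [y /andP [yY exy]]]]]].
  have ii := uniq x i i' xi xi'; subst i'.
  apply: (Hno X Y (comp_conn hs vU) cY bX bY _ x y xX yY exy).
  move=> y' x' y'Y x'X.
  have := subsetP YP y' y'Y; rewrite inE => /existsP [i1 /andP [y'i1 i1i]].
  have [i2 x'i2] := idx x'.
  exists i1, i2; split => //.
  apply: leq_trans i1i _; rewrite ik; apply: kmin; apply/existsP; exists x'.
  rewrite x'X /=; apply/existsP; exists i2; by rewrite x'i2 eqxx.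
pose N := ~: U.
have smallN : forall v, v \in N -> colourable e (gcomp e N v) (w + c).
  move=> v vN; set K := gcomp e N v.
  have exP : exists k, [exists x in K, exists i : 'I_n, (x \in W i) && (i == k :> nat)].
    have [i vi] := idx v; exists (nat_of_ord i); apply/existsP; exists v.
    rewrite comp_id //=; apply/existsP; exists i; by rewrite vi eqxx.
  have bnd : forall k, [exists x in K, exists i : 'I_n, (x \in W i) && (i == k :> nat)] -> k <= n.
    move=> k /existsP [x /andP [_ /existsP [i /andP [_ /eqP <-]]]]; exact: ltnW.
  case: (ex_maxnP exP bnd) => k /existsP [x0 /andP [x0K /existsP [i0 /andP [x0i0 /eqP i0k]]]] kmax.
  have Kidx : forall x, x \in K -> forall i : 'I_n, x \in W i -> i <= k.
    move=> x xK i xi; apply: kmax; apply/existsP; exists x; rewrite xK /=.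
    apply/existsP; exists i; by rewrite xi eqxx.
  have colW : colourable e (W i0) w := col_mono (chi_col _ hirr) (hW i0).
  set A := K :&: Pre k.
  have KAW : K \subset A :|: W i0.
    apply/subsetP => x xK; have [i xi] := idx x; rewrite in_setU in_setI xK /=.
    case: (ltnP i k) => [lt|ge].
      by apply/orP; left; rewrite inE; apply/existsP; exists i; rewrite xi lt.
    have -> : i0 = i by apply: val_inj; rewrite /= i0k; apply/eqP; rewrite eqn_leq ge (Kidx x xK i xi).
    by rewrite xi orbT.
  case A0: (A == set0).
    apply: col_sub (col_mono colW (leq_addr c w)) _.
    by move: KAW; rewrite (eqP A0) set0U.
  have colA : colourable e A c.
    apply: (col_comps hs (negbT A0)) => a aA; set Z := gcomp e A a.
    case bZ: (big Z); last by apply: (col_mono (chi_col _ hirr)); rewrite leqNgt; exact: negbT bZ.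
    exfalso.
    have aK : a \in K by move: aA; rewrite inE => /andP [].
    have cK := comp_conn hs vN.
    move: cK => /andP [_ /forallP /(_ a)]; rewrite aK /= => /forallP /(_ x0).
    rewrite x0K /= => cax0.
    have x0Z : x0 \notin Z.
      apply/negP => /(subsetP (comp_sub _ _ _)); rewrite !inE => /andP [_ /existsP [i /andP [x0i ik]]].
      by move: ik; rewrite (uniq x0 i i0 x0i x0i0) i0k ltnn.
    have [u [u' [uZ u'Z]]] := connect_exit cax0 (comp_id _ aA) x0Z.
    rewrite /rS /= => /andP [/andP [uK u'K] euu'].
    have uA : u \in A by apply: (subsetP (comp_sub _ _ _)) uZ.
    have u'A : u' \notin A.
      apply/negP => u'A; move: u'Z; rewrite -(comp_same hs uZ).
      by rewrite -(comp_adj hs uA u'A euu') comp_id.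
    have [i u'i] := idx u'.
    have ik : nat_of_ord i = k.
      apply/eqP; rewrite eqn_leq (Kidx u' u'K i u'i) /=.
      move: u'A; rewrite in_setI u'K /= inE leqNgt; apply: contra => lt.
      by apply/existsP; exists i; rewrite u'i lt.
    have : u' \in N by apply: (subsetP (comp_sub _ _ _)) u'K.
    rewrite inE => /negP; apply; rewrite inE; apply/existsP; exists i; rewrite u'i /=.
    apply/existsP; exists Z; apply/and4P; split.
    - rewrite ik; apply/subsetP => z zZ.
      by have := subsetP (comp_sub _ _ _) z zZ; rewrite inE => /andP [].
    - exact: comp_conn hs aA.
    - exact: bZ.
    - by apply/existsP; exists u; rewrite uZ hs.
  rewrite addnC; exact: col_sub (col_union colA colW) KAW.
have colT : colourable e [set: T] (w + 2 * c).
  have UN : [set: T] = U :|: N by rewrite setUCr.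
  case U0: (U == set0); case N0: (N == set0).
  - exfalso; have h0 : #|T| = 0 by rewrite -cardsT UN (eqP U0) (eqP N0) setU0 cards0.
    have := chi_le (col_all [set: T] hirr); rewrite h0; lia.
  - rewrite UN (eqP U0) set0U; apply: col_mono (col_comps hs (negbT N0) smallN) _; lia.
  - rewrite UN (eqP N0) setU0; apply: col_mono (col_comps hs (negbT U0) smallU) _; lia.
  - rewrite UN; apply: col_mono (col_union (col_comps hs (negbT U0) smallU)
                                             (col_comps hs (negbT N0) smallN)) _; lia.
have := chi_le colT; lia.
Qed.
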